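(* Let $\theta_1,\theta_2>0$, $\theta=\theta_1+\theta_2$, $p=\theta_1/\theta$, and let $\{\xi(t)\}_{t\ge0}$ be the Fleming–Viot process on $[0,1]$ with generator \[ \mathcal{L}g(x)=x\big(g(1)-g(x)\big)+(1-x)\big(g(0)-g(x)\big)+\tfrac12(\theta_1-\theta x)g'(x). \] Writing $\mathbb{E}_x$ for expectation given $\xi(0)=x$, for $n=0,1,\ldots$ \begin{align*} \mathbb{E}_x\big[(\xi(t)-p)^n\big]&=e^{-t(1+n\theta/2)}(x-p)^n\\ &\quad+\frac{2/\theta}{n+2/\theta}\Big[p(1-p)^n+(-1)^n(1-p)p^n\Big]\Big[1-e^{-t(1+n\theta/2)}\Big]\\ &\quad+\frac{(x-p)e^{-\theta t/2}(2/\theta)}{n-1+2/\theta}\Big[(1-p)^n-(-1)^np^n\Big]\Big[1-e^{-t(1+(n-1)\theta/2)}\Big]. \end{align*}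
   Context: $\{\xi(t)\}$ is the two-type star-shaped $\Lambda$-Fleming–Viot process with mutation: at rate 1 the whole population is replaced by the offspring of a single randomly chosen individual, and mutation occurs along lines at rate $\theta/2$ with new type 1 with probability $p$; $\xi(t)$ is the frequency of type 1. *)

(* Defs.v *)
From HB Require Import structures.
From mathcomp Require Import all_boot all_order all_algebra.
From mathcomp Require Import all_classical all_reals all_analysis.
Set Implicit Arguments. Unset Strict Implicit. Unset Printing Implicit Defensive.
Import Order.TTheory GRing.Theory Num.Theory.
Import numFieldNormedType.Exports.
Local Open Scope classical_set_scope.
Local Open Scope ring_scope.

Definition FV_gen {R : realType} (th1 th : R) (g : R -> R) (x : R) : R :=
  x * (g 1 - g x) + (1 - x) * (g 0 - g x) + (th1 - th * x) / 2 * derive1 g x.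

Definition C1fun {R : realType} (g : R -> R) : Prop :=
  (forall y : R, derivable g y 1) /\ continuous (derive1 g).

(* [xi] is (a version of) the Fleming--Viot process with generator
   [FV_gen th1 th], started at [x], on the probability space [(T, P)]:
   a jointly measurable process with values in [0,1], xi(0) = x, satisfying
   Dynkin's formula  E_x[g(xi t)] = g(x) + \int_0^t E_x[(L g)(xi s)] ds
   for every C^1 test function g (the expectation of the martingale
   problem for L). *)
Definition FV_process {R : realType} (th1 th : R) (x : R)
  {d : measure_display} {T : measurableType d} (P : probability T R)
  (xi : R -> T -> R) : Prop :=
  [/\ measurable_fun setT (fun q : R * T => xi q.1 q.2),
      (forall t w, 0 <= t -> 0 <= xi t w <= 1),
      (forall w, xi 0 w = x) &
      (forall g : R -> R, C1fun g -> forall t : R, 0 <= t ->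
         Rintegral P setT (fun w => g (xi t w)) =
         g x + Rintegral lebesgue_measure `[0, t]
                 (fun s => Rintegral P setT (fun w => FV_gen th1 th g (xi s w))))].

(* Main.v *)
Require Import Defs.
From HB Require Import structures.
From mathcomp Require Import all_boot all_order all_algebra.
From mathcomp Require Import all_classical all_reals all_analysis.
From mathcomp Require Import ring lra measurable_realfun.
Import Order.TTheory GRing.Theory Num.Theory.
Import numFieldNormedType.Exports.
Local Open Scope classical_set_scope.
Local Open Scope ring_scope.
Section Aux.
Context {R : realType}.

Lemma is_derive_expRM (a x : R) :
  is_derive x 1 (fun s => expR (a * s)) (a * expR (a * x)).
Proof.
have dl : derivable ( *%R a) x 1.
  by apply/derivable1_diffP.
have de : derivable (@expR R) (a * x) 1 by exact: ex_derive.
have dc : derivable (expR \o *%R a) x 1.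
  apply/derivable1_diffP; apply: differentiable_comp.
    exact/derivable1_diffP.
  exact/derivable1_diffP.
apply: DeriveDef; first exact: dc.
rewrite -derive1E.
rewrite (derive1_comp dl de).
rewrite derive1E (@derive_val _ _ _ _ _ _ _ (is_derive_expR _)).
rewrite derive1E.
have -> : 'D_1 ( *%R a) x = a.
  have h := @is_deriveZ R R R id a x 1 1 (is_derive_id _ _).
  have := @derive_val _ _ _ _ _ _ _ h.
  rewrite [X in X = _ -> _](_ : _ = 'D_1 ( *%R a) x) //.
  by move=> ->; rewrite /= -[RHS]mulr1.
by rewrite mulrC.
Qed.

Notation mu := (@lebesgue_measure R).

Lemma ode_unique (c u0 : R) (u k V : R -> R) :
  (forall t, 0 <= t -> mu.-integrable `[0, t] (EFin \o u)) ->
  continuous k ->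
  (forall t, 0 <= t -> u t = u0 + \int[mu]_(s in `[0, t]) (k s - c * u s)) ->
  (forall s : R, is_derive s (1:R) V (expR (c * s) * k s)) -> V 0 = u0 ->
  forall t, 0 <= t -> u t = expR (- (c * t)) * V t.
Proof.
move=> iu ck hu dV V0 t; rewrite le_eqVlt => /predU1P[<-|t0].
  by rewrite hu // set_itv1 Rintegral_set1 addr0 mulr0 oppr0 expR0 mul1r V0.
pose T := t + 1.
have T0 : 0 < T by rewrite /T addr_gt0.
have tT : t < T by rewrite /T ltrDl.
pose f := fun s => k s - c * u s.
have intf : mu.-integrable `[0, T] (EFin \o f).
  have -> : (EFin \o f) = (fun s => (k s)%:E - (c%:E * (u s)%:E))%E.
    by apply/funext => s; rewrite /f /= EFinB EFinM.
  apply: integrableB => //.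
    apply: continuous_compact_integrable; first exact: segment_compact.
    exact: continuous_subspaceT.
  by apply: integrableZl => //; apply: iu; exact: ltW.
pose F := fun y => \int[mu]_(s in `[0, y]) f s.
have Fc : {within `[0, T], continuous F}.
  exact: (parameterized_integral_continuous (ltW T0) intf).
have uF : forall y, 0 <= y -> u y = u0 + F y by move=> y y0; rewrite hu.
have dF : forall x : R, 0 < x < T -> derivable F x 1 /\ (F^`())%classic x = f x.
  move=> x /andP[x0 xT].
  apply: (continuous_FTC1_closed xT intf x0).
  have Fx : {for x, continuous F}.
    by apply: (within_continuous_continuous T0 Fc); rewrite in_itv /= x0 xT.
  have ux : {for x, continuous u}.
    have nu : \forall y \near x, u0 + F y = u y.
      near=> y; rewrite uF //; apply: ltW; near: y.
      exact: lt_nbhsr.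
    have h := cvg_trans (near_eq_cvg nu) (cvgD (cvg_cst u0) Fx).
    rewrite /prop_for /continuous_at (uF x (ltW x0)).
    by apply: h.
  rewrite /f; apply: (@continuousB _ _ _ k (fun s => c * u s)); first exact: ck.
  by apply: (@continuousM _ _ (cst c) u) => //; exact: cvg_cst.
pose W := fun y => expR (c * y) * (u0 + F y) - V y.
have dW : forall x, x \in `]0, t[ -> is_derive x (1:R) W 0.
  move=> x; rewrite in_itv /= => /andP[x0 xt].
  have hx : 0 < x < T by rewrite x0 (lt_trans xt tT).
  have [dFx F'x] := dF x hx.
  have iF : is_derive x (1:R) F (f x) by rewrite -F'x derive1E; exact: derivableP.
  have iG : is_derive x (1:R) (fun y => u0 + F y) (f x).
    by have := is_deriveD (is_derive_cst u0 x 1) iF; rewrite add0r.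
  have iE := is_derive_expRM c x.
  have := is_deriveB (is_deriveM iE iG) (dV x).
  move=> h; have h2 : is_derive x (1:R) W _ := h; apply: (is_derive_eq h2).
  rewrite /f -(uF x (ltW x0)) -![_ *: _]/(_ * _).
  ring.
have cE : continuous (fun s => expR (c * s)).
  move=> y; apply: differentiable_continuous; apply/derivable1_diffP.
  by case: (is_derive_expRM c y).
have cV : continuous V.
  move=> y; apply: differentiable_continuous; apply/derivable1_diffP.
  by case: (dV y).
have Wc : {within `[0, t], continuous W}.
  have sub : `[0, t] `<=` `[0, T] by apply: subset_itvl; rewrite bnd_simp ltW.
  have Fc' := continuous_subspaceW sub Fc.
  move=> z.
  apply: (@continuousB _ _ (subspace `[0, t]) (fun y => expR (c*y) * (u0 + F y)) V).
    apply: (@continuousM _ (subspace `[0, t]) (fun y => expR (c*y)) (fun y => u0 + F y)).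
      exact: (continuous_subspaceT cE).
    apply: (@continuousD _ _ (subspace `[0, t]) (cst u0) F); first exact: cvg_cst.
    exact: Fc'.
  exact: (continuous_subspaceT cV).
have W0 : W 0 = 0.
  by rewrite /W /F set_itv1 Rintegral_set1 addr0 mulr0 expR0 mul1r V0 subrr.
have [z _ E] := MVT_segment (ltW t0) dW Wc.
have Wt : W t = 0 by move: E; rewrite mul0r W0 subr0.
have EV : expR (c * t) * (u0 + F t) = V t.
  by apply/eqP; rewrite -subr_eq0; apply/eqP; exact: Wt.
rewrite -EV (uF t (ltW t0)) mulrA -expRD addNr expR0 mul1r.
done.
Unshelve. all: by end_near.
Qed.

Lemma is_derive_powB (p y : R) n :
  is_derive y (1:R) (fun z => (z - p) ^+ n) (n%:R * (y - p) ^+ n.-1).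
Proof.
have h := is_deriveX n (is_deriveB (is_derive_id y (1:R)) (is_derive_cst p y (1:R))).
have -> : (fun z => (z - p) ^+ n) = (id - cst p) ^+ n.
  by apply/funext => z; rewrite exprfctE.
apply: (is_derive_eq h).
by rewrite subr0 -[_ *: _]/(_ * _) mulr1.
Qed.

Lemma derive1_powB (p y : R) n :
  (fun z => (z - p) ^+ n)^`()%classic y = n%:R * (y - p) ^+ n.-1.
Proof.
by rewrite derive1E (@derive_val _ _ _ _ _ _ _ (is_derive_powB p y n)).
Qed.

Lemma cont_powB (p : R) n : continuous (fun z => (z - p) ^+ n).
Proof.
move=> y; apply: differentiable_continuous; apply/derivable1_diffP.
by case: (is_derive_powB p y n).
Qed.

Lemma C1_powB (p : R) n : C1fun (fun z => (z - p) ^+ n).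
Proof.
split; first by move=> y; case: (is_derive_powB p y n).
have -> : (fun z => (z - p) ^+ n)^`()%classic = fun y => n%:R * (y - p) ^+ n.-1.
  by apply/funext => y; rewrite derive1_powB.
move=> y; apply: (@continuousM _ _ (cst n%:R) (fun y => (y - p) ^+ n.-1)).
  exact: cvg_cst.
exact: cont_powB.
Qed.

Lemma FV_powB (th1 th p y : R) n : th1 = p * th ->
  FV_gen th1 th (fun z => (z - p) ^+ n) y =
  (p * (1 - p) ^+ n + (1 - p) * (- p) ^+ n) + ((1 - p) ^+ n - (- p) ^+ n) * (y - p)
  - (1 + n%:R * th / 2) * (y - p) ^+ n.
Proof.
move=> ->; rewrite /FV_gen derive1_powB sub0r.
case: n => [|m]; first by rewrite !expr0 /=; ring.
rewrite /= !exprS; ring.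
Qed.

Lemma pow_le1 (p y : R) m : 0 <= p <= 1 -> 0 <= y <= 1 -> `|(y - p) ^+ m| <= 1.
Proof.
move=> /andP[p0 p1] /andP[y0 y1]; rewrite normrX; apply: exprn_ile1 => //.
by rewrite ler_norml; apply/andP; split; lra.
Qed.

Lemma bnd_ab (p a b y : R) m : 0 <= p <= 1 -> 0 <= y <= 1 ->
  `|a + b * (y - p) ^+ m| <= `|a| + `|b|.
Proof.
move=> hp hy; apply: le_trans (ler_normD _ _) _; rewrite lerD2l normrM.
by rewrite -[leRHS]mulr1; apply: ler_wpM2l => //; exact: pow_le1.
Qed.

Lemma cont_expRM (a : R) : continuous (fun s => expR (a * s)).
Proof.
move=> y; apply: differentiable_continuous; apply/derivable1_diffP.
by case: (is_derive_expRM a y).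
Qed.
End Aux.

Section Prob.
Context {R : realType} {d : measure_display} {T : measurableType d}
  (P : probability T R) (xi : R -> T -> R).
Hypothesis mxi : measurable_fun setT (fun q : R * T => xi q.1 q.2).

Definition clamp (y : R) : R := Num.max 0 (Num.min y 1).

Lemma clamp_id y : 0 <= y <= 1 -> clamp y = y.
Proof.
by case/andP=> y0 y1; rewrite /clamp (min_l y1) (max_r y0).
Qed.

Lemma clamp01 y : 0 <= clamp y <= 1.
Proof.
rewrite /clamp le_max lexx /= ge_max ler01 /= ge_min lexx orbT.
by [].
Qed.

Lemma clamp_meas : measurable_fun setT clamp.
Proof.
have -> : clamp = (cst 0 \max (id \min cst 1)) by [].
apply: measurable_maxr => //; apply: measurable_minr => //.
Qed.

Lemma mxis s : measurable_fun setT (xi s).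
Proof.
have -> : xi s = (fun q : R * T => xi q.1 q.2) \o pair s by [].
exact: measurableT_comp mxi (pair1_measurable s).
Qed.

Lemma intP (psi : R -> R) K s : measurable_fun setT psi ->
  (forall y, 0 <= y <= 1 -> `|psi y| <= K) ->
  P.-integrable setT (EFin \o (fun w => psi (clamp (xi s w)))).
Proof.
move=> mpsi bK.
have PT : (P setT < +oo)%E by rewrite probability_setT ltry.
apply: measurable_bounded_integrable => //.
  apply: measurableT_comp => //; apply: measurableT_comp => //.
  exact: clamp_meas. exact: mxis.
exists K; split; first by rewrite num_real.
move=> M KM w _; apply: le_trans (bK _ (clamp01 _)) _; exact: ltW.
Qed.

Lemma measE (psi : R -> R) K : measurable_fun setT psi ->
  (forall y, 0 <= y <= 1 -> `|psi y| <= K) ->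
  measurable_fun setT (fun s => \int[P]_w psi (clamp (xi s w))).
Proof.
move=> mpsi bK.
pose H := fun q : R * T => psi (clamp (xi q.1 q.2)) + K.
have mH : measurable_fun setT H.
  apply: measurable_funD => //.
  apply: measurableT_comp => //; apply: measurableT_comp => //.
  exact: clamp_meas.
have H0 : forall q, (0 <= (EFin \o H) q)%E.
  move=> q; rewrite lee_fin /H -lerBlDr sub0r.
  have := bK _ (clamp01 (xi q.1 q.2)).
  by rewrite ler_norml => /andP[].
have mF := @measurable_fun_fubini_tonelli_F _ _ R T R P
  (EFin \o H) (proj2 (measurable_EFinP _ _) mH) H0.
have -> : (fun s => \int[P]_w psi (clamp (xi s w))) =
          (fun s => fine (fubini_F P (EFin \o H) s) - K).
  apply/funext => s; rewrite /fubini_F /=.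
  have -> : fine (\int[P]_y (H (s, y))%:E) = \int[P]_y H (s, y) by [].
  rewrite /H RintegralD //; last first.
    exact: (@finite_measure_integrable_cst _ _ _ P setT K).
    by move: (@intP psi K s mpsi bK).
  rewrite Rintegral_cst // [X in K * X](_ : _ = 1); last exact: (congr1 fine (probability_setT P)).
  by rewrite mulr1 addrK.
apply: measurable_funB => //.
apply: measurableT_comp => //; exact: fine_measurable.
Qed.

Variables (th1 th x : R).
Hypothesis Hb : forall t w, 0 <= t -> 0 <= xi t w <= 1.
Hypothesis Hx : 0 <= x <= 1.
Hypothesis Hdyn : forall g : R -> R, C1fun g -> forall t : R, 0 <= t ->
  \int[P]_w g (xi t w) =
  g x + \int[lebesgue_measure]_(s in `[0, t]) (\int[P]_w FV_gen th1 th g (xi s w)).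

Definition EE (psi : R -> R) s := \int[P]_w psi (clamp (xi s w)).

Lemma EE_eq (psi : R -> R) (s : R) : 0 <= s -> \int[P]_w psi (xi s w) = EE psi s.
Proof. by move=> s0; apply: eq_Rintegral => w _; rewrite clamp_id // Hb. Qed.

Lemma EE_bound (psi : R -> R) (K s : R) : measurable_fun setT psi ->
  (forall y, 0 <= y <= 1 -> `|psi y| <= K) -> `|EE psi s| <= K.
Proof.
move=> mpsi bK; have iP := @intP psi K s mpsi bK.
apply: le_trans (le_normr_Rintegral _ iP) _ => //.
apply: le_trans (@le_Rintegral _ _ _ P setT _ (cst K) _ _ _ _) _ => //.
- exact: integrable_norm.
- exact: (@finite_measure_integrable_cst _ _ _ P setT K).
- by move=> w _; apply: bK; exact: clamp01.
rewrite Rintegral_cst // [X in K * X](_ : _ = 1); last exact: (congr1 fine (probability_setT P)).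
by rewrite mulr1.
Qed.

Lemma moment_ode (g : R -> R) (K c : R) (kf V : R -> R) : C1fun g -> measurable_fun setT g ->
  (forall y, 0 <= y <= 1 -> `|g y| <= K) ->
  (forall s, 0 <= s -> \int[P]_w FV_gen th1 th g (xi s w) = kf s - c * EE g s) ->
  continuous kf -> (forall s : R, is_derive s (1:R) V (expR (c * s) * kf s)) ->
  V 0 = g x ->
  forall t, 0 <= t -> EE g t = expR (- (c * t)) * V t.
Proof.
move=> C1 mg bg hL ck dV V0.
apply: (@ode_unique _ c (g x) (EE g) kf V) => //.
- move=> t t0; apply: measurable_bounded_integrable => //.
  + have h : (lebesgue_measure `[0%R, t] < +oo)%E.
      by rewrite lebesgue_measure_itv /= lte_fin; case: ifP => _; rewrite ltry.
    exact: h.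
  + exact: (measurable_funS measurableT (@subsetT _ _) (@measE g K mg bg)).
  + exists K; split; first by rewrite num_real.
    move=> M KM s _; apply: le_trans (@EE_bound g K s mg bg) _; exact: ltW.
- move=> t t0; rewrite -(@EE_eq g t t0) Hdyn //; congr (_ + _).
  apply: eq_Rintegral => s; rewrite inE /= in_itv /= => /andP[s0 _].
  exact: hL.
Qed.

Lemma mpoly (p a b : R) m : measurable_fun setT (fun z : R => a + b * (z - p) ^+ m).
Proof.
apply: measurable_funD => //; apply: measurable_funM => //.
exact: (continuous_measurable_fun (cont_powB p m)).
Qed.

Lemma int_FV (p : R) n (s : R) : th1 = p * th -> 0 <= p <= 1 -> 0 <= s ->
  \int[P]_w FV_gen th1 th (fun z => (z - p) ^+ n) (xi s w) =
  (p * (1 - p) ^+ n + (1 - p) * (- p) ^+ n)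
  + ((1 - p) ^+ n - (- p) ^+ n) * EE (fun z => (z - p) ^+ 1) s
  - (1 + n%:R * th / 2) * EE (fun z => (z - p) ^+ n) s.
Proof.
move=> hth hp s0.
set A := (p * (1 - p) ^+ n + (1 - p) * (- p) ^+ n).
set B := ((1 - p) ^+ n - (- p) ^+ n).
set c := (1 + n%:R * th / 2).
transitivity (\int[P]_w ((A + B * (clamp (xi s w) - p) ^+ 1)
                         - c * (clamp (xi s w) - p) ^+ n)).
  apply: eq_Rintegral => w _; rewrite FV_powB // clamp_id ?Hb // expr1.
have i1 : P.-integrable setT (EFin \o (fun w => A + B * (clamp (xi s w) - p) ^+ 1)).
  apply: (@intP (fun z => A + B * (z - p) ^+ 1) (`|A| + `|B|) s) => //.
    exact: mpoly.
  by move=> y hy; apply: bnd_ab.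
have i2 : P.-integrable setT (EFin \o (fun w => (clamp (xi s w) - p) ^+ n)).
  apply: (@intP (fun z => (z - p) ^+ n) 1 s) => //.
    exact: (continuous_measurable_fun (cont_powB p n)).
  by move=> y hy; apply: pow_le1.
have i3 : P.-integrable setT (EFin \o (fun w => (clamp (xi s w) - p) ^+ 1)).
  apply: (@intP (fun z => (z - p) ^+ 1) 1 s) => //.
    exact: (continuous_measurable_fun (cont_powB p 1)).
  by move=> y hy; apply: pow_le1.
have i4 : P.-integrable setT (EFin \o (fun w => c * (clamp (xi s w) - p) ^+ n)).
  apply: (@intP (fun z => c * (z - p) ^+ n) `|c| s) => //.
    apply: measurable_funM => //.
    exact: (continuous_measurable_fun (cont_powB p n)).
  move=> y hy; have := @bnd_ab _ p 0 c y n hp hy.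
  by rewrite !add0r normr0 add0r.
rewrite RintegralB // RintegralD //; last first.
  apply: (@intP (fun z => B * (z - p) ^+ 1) `|B| s) => //.
    apply: measurable_funM => //.
    exact: (continuous_measurable_fun (cont_powB p 1)).
  move=> y hy; have := @bnd_ab _ p 0 B y 1 hp hy.
  by rewrite !add0r normr0 add0r.
  exact: (@finite_measure_integrable_cst _ _ _ P setT A).
rewrite Rintegral_cst // [X in A * X](_ : _ = 1); last exact: (congr1 fine (probability_setT P)).
by rewrite mulr1 !RintegralZl.
Qed.
End Prob.

Theorem corollary1 (R : realType) (th1 th2 : R) (x : R)
  (d : measure_display) (T : measurableType d) (P : probability T R)
  (xi : R -> T -> R) :
  0 < th1 -> 0 < th2 -> 0 <= x <= 1 ->
  let th := th1 + th2 in
  let p := th1 / th in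
  FV_process th1 th x P xi ->
  forall (n : nat) (t : R), 0 <= t ->
  Rintegral P setT (fun w => (xi t w - p) ^+ n) =
    expR (- (t * (1 + n%:R * th / 2))) * (x - p) ^+ n
  + (2 / th) / (n%:R + 2 / th)
      * (p * (1 - p) ^+ n + (-1) ^+ n * (1 - p) * p ^+ n)
      * (1 - expR (- (t * (1 + n%:R * th / 2))))
  + (x - p) * expR (- (th * t / 2)) * (2 / th) / (n%:R - 1 + 2 / th)
      * ((1 - p) ^+ n - (-1) ^+ n * p ^+ n)
      * (1 - expR (- (t * (1 + (n%:R - 1) * th / 2)))).
Proof.
move=> th1p th2p hx th p [mxi hb hx0 dyn] n t t0.
have thp : 0 < th by rewrite /th addr_gt0.
have thn0 : th != 0 by rewrite gt_eqF.
have hth : th1 = p * th by rewrite /p divfK.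
have hp : 0 <= p <= 1.
  rewrite /p divr_ge0 ?ltW //=.
  by rewrite ltr_pdivrMr // mul1r /th ltrDl.
have hb' : forall t w, 0 <= t -> 0 <= xi t w <= 1 by move=> ? ? ?; apply: hb.
pose g1 := fun z : R => (z - p) ^+ 1.
have m1 : forall s, 0 <= s -> EE P xi g1 s = expR (- (th / 2 * s)) * (x - p).
  move=> s s0.
  apply: (@moment_ode R d T P xi mxi th1 th x hb' dyn g1 1 (th / 2) (cst 0)
     (cst (x - p))) => //.
  - exact: C1_powB.
  - exact: (continuous_measurable_fun (cont_powB p 1)).
  - by move=> y hy; apply: pow_le1.
  - move=> r r0; rewrite (@int_FV R d T P xi mxi th1 th hb' p 1 r) //.
    rewrite /g1 !expr1 /=; ring.
  - exact: cst_continuous.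
  - move=> r; apply: (is_derive_eq (is_derive_cst (x - p) r (1:R))).
    by rewrite /= mulr0.
set A := p * (1 - p) ^+ n + (1 - p) * (- p) ^+ n.
set B := (1 - p) ^+ n - (- p) ^+ n.
set c := 1 + n%:R * th / 2.
set c' := 1 + (n%:R - 1) * th / 2.
have cp : 0 < c.
  have h1 : 0 <= n%:R * th / 2 by rewrite divr_ge0 // mulr_ge0 // ltW.
  rewrite /c; lra.
have cn0 : c != 0 by rewrite gt_eqF.
have Bc' : c'^-1 * c' * B = B.
  have [n0|npos] := posnP n.
    by rewrite /B n0 !expr0 subrr mulr0.
  have : 0 < c'.
    have h : 0 <= (n%:R - 1) * th / 2.
      by rewrite divr_ge0 // mulr_ge0 // ?subr_ge0 ?ler1n // ltW.
    rewrite /c'; lra.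
  by move=> /gt_eqF/negbT ?; rewrite mulVf // mul1r.
pose g := fun z : R => (z - p) ^+ n.
pose kf := fun s : R => A + B * (expR (- (th / 2) * s) * (x - p)).
pose V := fun s : R => (x - p) ^+ n + c^-1 * A * (expR (c * s) - 1)
  + c'^-1 * B * (x - p) * (expR (c' * s) - 1).
have dV : forall s : R, is_derive s (1:R) V (expR (c * s) * kf s).
  move=> s.
  have h := is_deriveD (is_deriveD (is_derive_cst ((x - p) ^+ n) s (1:R))
    (is_deriveZ (c^-1 * A) (is_deriveB (is_derive_expRM c s) (is_derive_cst (1:R) s (1:R)))))
    (is_deriveZ (c'^-1 * B * (x - p))
       (is_deriveB (is_derive_expRM c' s) (is_derive_cst (1:R) s (1:R)))).
  have -> : V = (cst ((x - p) ^+ n) + (c^-1 * A) *: ((fun s => expR (c * s)) - cst 1))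
     + (c'^-1 * B * (x - p)) *: ((fun s => expR (c' * s)) - cst 1) by apply/funext.
  apply: (is_derive_eq h).
  have E' : expR (c' * s) = expR (c * s) * expR (- (th / 2) * s).
    by rewrite -expRD /c' /c; congr expR; ring.
  rewrite E' /kf -![_ *: _]/(_ * _).
  transitivity ((c^-1 * c) * (A * expR (c * s))
    + (c'^-1 * c' * B) * ((x - p) * expR (c * s) * expR (- (th / 2) * s))).
    ring.
  rewrite mulVf // Bc' mul1r; ring.
have key : EE P xi g t = expR (- (c * t)) * V t.
  apply: (@moment_ode R d T P xi mxi th1 th x hb' dyn g 1 c kf V) => //.
  - exact: C1_powB.
  - exact: (continuous_measurable_fun (cont_powB p n)).
  - by move=> y hy; apply: pow_le1.
  - move=> r r0; rewrite (@int_FV R d T P xi mxi th1 th hb' p n r) //.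
    by rewrite (m1 r r0) /kf mulNr.
  - move=> s.
    apply: (@continuousD _ _ _ (cst A) (fun s => B * (expR (- (th / 2) * s) * (x - p)))).
      exact: cvg_cst.
    apply: (@continuousM _ _ (cst B) (fun s => expR (- (th / 2) * s) * (x - p))).
      exact: cvg_cst.
    apply: (@continuousM _ _ (fun s => expR (- (th / 2) * s)) (cst (x - p))).
      exact: cont_expRM.
    exact: cvg_cst.
  - by rewrite /V !mulr0 expR0 !subrr !mulr0 !addr0.
rewrite (@EE_eq R d T P xi hb' g t t0) key.
have th2n0 : 2 / th != 0 by rewrite mulf_neq0 // invr_eq0.
have e1 : 2 / th / (n%:R + 2 / th) = c^-1.
  rewrite (_ : n%:R + 2 / th = 2 / th * c); last by rewrite /c; field.
  by rewrite invfM mulrA divff ?mul1r.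
have e2 : (x - p) * expR (- (th * t / 2)) * (2 / th) / (n%:R - 1 + 2 / th)
    = (x - p) * expR (- (th * t / 2)) * c'^-1.
  rewrite (_ : n%:R - 1 + 2 / th = 2 / th * c'); last by rewrite /c'; field.
  by rewrite invfM mulrA mulfK.
have Ec : expR (- (c * t)) = expR (- (th * t / 2)) * expR (- (t * c')).
  by rewrite -expRD; congr expR; rewrite /c /c'; ring.
have Et : expR (- (t * c)) = expR (- (th * t / 2)) * expR (- (t * c')).
  by rewrite -expRD; congr expR; rewrite /c /c'; ring.
have Ect : expR (c * t) = (expR (- (th * t / 2)) * expR (- (t * c')))^-1.
  by rewrite -Ec expRN invrK.
have Ec't : expR (c' * t) = (expR (- (t * c')))^-1.
  by rewrite expRN invrK mulrC.
rewrite e1 e2 /V Ect Ec't Ec Et /A /B (exprNn p n).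
have E1n : expR (- (th * t / 2)) != 0 by rewrite expR_eq0.
have E2n : expR (- (t * c')) != 0 by rewrite expR_eq0.
move: E1n E2n; generalize (expR (- (th * t / 2))) (expR (- (t * c'))) (c^-1) (c'^-1).
move=> E1 E2 ic ic' E1n E2n.
field.
by rewrite E1n E2n.
Qed.
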